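(* Let $G$ be a finite group and $R,R'$ orthogonal $G$-representations. Then, in the lattice of $G$-weak indexing systems, $\underline{\mathbb F}^{R}\vee\underline{\mathbb F}^{R'}=\underline{\mathbb F}^{R\oplus R'}$.
   Context: For $H\le G$, $\mathbb F_H$ is the category of finite $H$-sets, $*_H$ the one-point $H$-set. A $G$-weak indexing system is an assignment $H\mapsto\mathcal C_H$ of isomorphism-closed classes of finite $H$-sets, stable under restriction to subgroups and conjugation, such that $\mathcal C_H\neq\emptyset$ implies $*_H\in\mathcal C_H$, and closed under self-indexed coproducts: if $S\in\mathcal C_H$ and for each orbit $[H/K]\subseteq S$ (with chosen point) a $K$-set $T\in\mathcal C_K$ is given, then $\coprod\mathrm{Ind}_K^HT\in\mathcal C_H$. These form a lattice under inclusion, $\vee$ denoting the join. For an orthogonal $G$-representation $R$, $\underline{\mathbb F}^R$ is the $G$-weak indexing system $\mathbb F^R_H=\{S\in\mathbb F_H\mid\text{there is an }H\text{-equivariant embedding }S\hookrightarrow R\}$. *)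

(* Defs.v *)
From HB Require Import structures.
From mathcomp Require Import all_boot all_order all_algebra all_fingroup.
From mathcomp Require Import mxrepresentation.
From mathcomp Require Import reals.
Set Implicit Arguments.
Unset Strict Implicit.
Unset Printing Implicit Defensive.
Import GRing.Theory.
Local Open Scope ring_scope.

(* Finite H-sets are encoded as a finite type T with a RIGHT action
   act : T -> gT -> T (MathComp convention), required to be an action
   only for elements of H. *)
Definition is_Hset (gT : finGroupType) (H : {set gT}) (T : finType)
    (act : T -> gT -> T) : Prop :=
  (forall x, act x 1%g = x) /\
  (forall x a b, a \in H -> b \in H -> act x (a * b)%g = act (act x a) b).

Arguments is_Hset {gT} H T act.

Definition hclass (gT : finGroupType) := forall (T : finType), (T -> gT -> T) -> Prop.

(* An assignment H |-> C H of classes (only H <= G matters). *)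
Definition assignment (gT : finGroupType) := {set gT} -> hclass gT.

Definition Hequiv (gT : finGroupType) (H : {set gT}) (T T' : finType)
    (a : T -> gT -> T) (a' : T' -> gT -> T') (f : T -> T') : Prop :=
  forall x h, h \in H -> f (a x h) = a' (f x) h.

Section WIS.
Variables (gT : finGroupType) (G : {group gT}).

Definition iso_closed (C : assignment gT) : Prop :=
  forall (H : {group gT}), H \subset G ->
  forall (T T' : finType) (a : T -> gT -> T) (a' : T' -> gT -> T'),
    is_Hset H T a -> is_Hset H T' a' ->
    forall f : T -> T', bijective f -> Hequiv H a a' f ->
    C H T a -> C H T' a'.

Definition restr_closed (C : assignment gT) : Prop :=
  forall (H K : {group gT}), H \subset G -> K \subset H ->
  forall (T : finType) (a : T -> gT -> T),
    is_Hset H T a -> C H T a -> C K T a.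

(* conjugation: H :^ g = g^-1 H g, and the H-set S becomes the
   (H :^ g)-set with x . k := x . (g k g^-1). *)
Definition conj_closed (C : assignment gT) : Prop :=
  forall (H : {group gT}), H \subset G -> forall g, g \in G ->
  forall (T : finType) (a : T -> gT -> T),
    is_Hset H T a -> C H T a ->
    C (H :^ g)%g T (fun x k => a x (g * k * g^-1)%g).

Definition point_closed (C : assignment gT) : Prop :=
  forall (H : {group gT}), H \subset G ->
  (exists (T : finType) (a : T -> gT -> T), is_Hset H T a /\ C H T a) ->
  C H unit (fun x _ => x).

Definition stabH (H : {set gT}) (TS : finType) (aS : TS -> gT -> TS) (s : TS)
  : {set gT} := [set h in H | aS s h == s].

(* Class of (t, h) in T x H modulo (t.k, h) ~ (t, k h), k in K:
   it is {(t.k, k^-1 h) | k in K}.  These classes form Ind_K^H T. *)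
Definition ind_cls (K : {set gT}) (T : finType) (aT : T -> gT -> T)
    (t : T) (h : gT) : {set (T * gT)} :=
  [set (aT t k, (k^-1 * h)%g) | k in K].

Definition ind_act (TS : finType) (T : TS -> finType)
    (p : {s : TS & {set (T s * gT)}}) (g : gT) : {s : TS & {set (T s * gT)}} :=
  let: existT s A := p in
  existT (fun s => {set (T s * gT)}) s [set (x.1, (x.2 * g)%g) | x in A].

(* Elements of the coproduct over orbit representatives s (rep s = s) of
   Ind_{Stab_H(s)}^H (T s). *)
Definition coprod_elt (H : {set gT}) (TS : finType) (aS : TS -> gT -> TS)
    (rep : TS -> TS) (T : TS -> finType) (aT : forall s, T s -> gT -> T s)
    (p : {s : TS & {set (T s * gT)}}) : Prop :=
  let: existT s A := p in
  rep s = s /\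
  exists (t : T s) (h : gT), h \in H /\ A = ind_cls (stabH H aS s) (aT s) t h.

Definition orbit_reps (H : {set gT}) (TS : finType) (aS : TS -> gT -> TS)
    (rep : TS -> TS) : Prop :=
  (forall s h, h \in H -> rep (aS s h) = rep s) /\
  (forall s, exists2 h, h \in H & aS s h = rep s).

(* Closure under self-indexed coproducts: any H-set X isomorphic to
   coprod_{orbits H/K of S} Ind_K^H T_K lies in C H. *)
Definition coprod_closed (C : assignment gT) : Prop :=
  forall (H : {group gT}), H \subset G ->
  forall (TS : finType) (aS : TS -> gT -> TS),
    is_Hset H TS aS -> C H TS aS ->
  forall rep : TS -> TS, orbit_reps H aS rep ->
  forall (T : TS -> finType) (aT : forall s, T s -> gT -> T s),
    (forall s, rep s = s ->
       is_Hset (stabH H aS s) (T s) (aT s) /\ C (stabH H aS s) (T s) (aT s)) ->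
  forall (TX : finType) (aX : TX -> gT -> TX), is_Hset H TX aX ->
  forall f : TX -> {s : TS & {set (T s * gT)}},
    injective f ->
    (forall p, coprod_elt H aS rep aT p <-> exists x, f x = p) ->
    Hequiv H aX (@ind_act TS T) f ->
    C H TX aX.

Definition weak_indexing_system (C : assignment gT) : Prop :=
  [/\ iso_closed C, restr_closed C, conj_closed C, point_closed C
    & coprod_closed C].

Definition sub_assign (C D : assignment gT) : Prop :=
  forall (H : {group gT}), H \subset G ->
  forall (T : finType) (a : T -> gT -> T), is_Hset H T a -> C H T a -> D H T a.

Definition is_wis_join (C1 C2 J : assignment gT) : Prop :=
  [/\ weak_indexing_system J, sub_assign C1 J, sub_assign C2 J &
      forall D, weak_indexing_system D -> sub_assign C1 D -> sub_assign C2 D ->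
        sub_assign J D].

End WIS.

Definition orth_rep (gT : finGroupType) (G : {group gT}) (R : realType) (n : nat)
    (rho : gT -> 'M[R]_n) : Prop :=
  mx_repr G rho /\ (forall g, g \in G -> rho g *m (rho g)^T = 1%:M).

Definition dsum_rep (gT : finGroupType) (R : realType) (n n' : nat)
    (rho : gT -> 'M[R]_n) (rho' : gT -> 'M[R]_n') : gT -> 'M[R]_(n + n') :=
  fun g => block_mx (rho g) 0 0 (rho' g).

Definition FR (gT : finGroupType) (R : realType) (n : nat)
    (rho : gT -> 'M[R]_n) : assignment gT :=
  fun H T a => exists f : T -> 'rV[R]_n,
    injective f /\ forall x h, h \in H -> f (a x h) = f x *m rho h.

(* Main.v *)
Require Import Defs.
From mathcomp Require Import all_boot all_order all_algebra all_fingroup.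
From mathcomp Require Import mxrepresentation reals boolp.
From Stdlib Require Import Eqdep_dec.
Set Implicit Arguments.
Unset Strict Implicit.
Unset Printing Implicit Defensive.
Import Order.TTheory GRing.Theory Num.Theory.
Local Open Scope ring_scope.

Section Gen.
Variables (gT : finGroupType) (G : {group gT}) (R : realType).

Lemma ind_cls_move (K : {group gT}) (T : finType) (aT : T -> gT -> T) :
  is_Hset K T aT -> forall t h k, k \in K ->
  ind_cls K aT (aT t k) (k^-1 * h)%g = ind_cls K aT t h.
Proof.
move=> [a1 aM] t h k kK; apply/setP=> z; apply/imsetP/imsetP=> [[j jK ->]|[j jK ->]].
- exists (k * j)%g; first by rewrite groupM.
  by rewrite aM // invMg -mulgA.
- exists (k^-1 * j)%g; first by rewrite groupM ?groupV.
  by rewrite -aM ?groupM ?groupV // mulKVg invMg invgK -mulgA mulKVg.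
Qed.

Lemma ind_act_cls (K : {set gT}) (T : finType) (aT : T -> gT -> T) t h g :
  [set (x.1, (x.2 * g)%g) | x in ind_cls K aT t h] = ind_cls K aT t (h * g)%g.
Proof.
rewrite /ind_cls -imset_comp; apply: eq_imset => k /=; by rewrite mulgA.
Qed.

Lemma cls_eq (K : {set gT}) (T : finType) (aT : T -> gT -> T) t h t' h' :
  aT t 1%g = t -> 1%g \in K -> ind_cls K aT t h = ind_cls K aT t' h' ->
  exists2 k, k \in K & t = aT t' k /\ h = (k^-1 * h')%g.
Proof.
move=> a1 K1 E.
have : (t, h) \in ind_cls K aT t h.
  by apply/imsetP; exists 1%g => //; rewrite a1 invg1 mul1g.
by rewrite E => /imsetP[k kK [-> ->]]; exists k.
Qed.

Lemma stab_group_set (H : {group gT}) (TS : finType) (aS : TS -> gT -> TS) s :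
  is_Hset H TS aS -> group_set (stabH H aS s).
Proof.
move=> [a1 aM]; apply/group_setP; rewrite /stabH; split; first by rewrite inE group1 a1 eqxx.
move=> x y; rewrite !inE => /andP[xH /eqP xs] /andP[yH /eqP ys].
by rewrite groupM //= aM // xs ys eqxx.
Qed.

Definition stabG (H : {group gT}) (TS : finType) (aS : TS -> gT -> TS) s
  (HS : is_Hset H TS aS) : {group gT} := Group (stab_group_set s HS).

Lemma stab_sub (H : {group gT}) (TS : finType) (aS : TS -> gT -> TS) s :
  stabH H aS s \subset H.
Proof. by apply/subsetP=> x; rewrite inE => /andP[]. Qed.

Variables (N : nat) (rho : gT -> 'M[R]_N).
Hypothesis repr : mx_repr G rho.

Lemma rhoM x y : x \in G -> y \in G -> rho (x * y)%g = rho x *m rho y.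
Proof. by case: repr => _ M xG yG; apply: M. Qed.
Lemma rho1 : rho 1%g = 1%:M.
Proof. by case: repr. Qed.

Lemma FR_iso : iso_closed G (FR rho).
Proof.
move=> H sHG T T' a a' _ _ f [g fK gK] hf [e [ei he]].
exists (e \o g); split.
- by move=> x y /= /ei /(can_inj gK).
- move=> y h hH /=; rewrite -{1}(gK y) -hf // fK; exact: he.
Qed.

Lemma FR_restr : restr_closed G (FR rho).
Proof.
move=> H K sHG sKH T a _ [e [ei he]]; exists e; split=> // x h hK.
by apply: he; exact: (subsetP sKH).
Qed.

Lemma FR_conj : conj_closed G (FR rho).
Proof.
move=> H sHG g gG T a _ [e [ei he]].
exists (fun x => e x *m rho g); split.
- move=> x y /= E; apply: ei.
  have : e x *m rho g *m rho g^-1 = e y *m rho g *m rho g^-1 by rewrite E.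
  by rewrite -!mulmxA -rhoM ?groupV // mulgV rho1 !mulmx1.
- move=> x k; rewrite mem_conjg => kH /=.
  have kHG : (k ^ g^-1)%g \in G by exact: (subsetP sHG).
  have kG : k \in G by rewrite -(conjgKV g k) groupJ.
  have -> : (g * k * g^-1)%g = (k ^ g^-1)%g by rewrite /conjg invgK mulgA.
  rewrite he // -mulmxA -rhoM //.
  have -> : (k ^ g^-1 * g)%g = (g * k)%g by rewrite /conjg invgK -!mulgA mulVg mulg1.
  by rewrite rhoM // mulmxA.
Qed.

Lemma FR_point : point_closed G (FR rho).
Proof.
move=> H _ _; exists (fun _ => 0); split; first by case; case.
by move=> x h _; rewrite mul0mx.
Qed.


Lemma FR_coprod : coprod_closed G (FR rho).
Proof.
move=> H sHG TS aS HS [eS [eSi eSe]] rep [repE repP] T aT HT TX aX HX f fi fim fe.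
have HSc := HS; case: HSc => [aS1 aSM].
have HXc := HX; case: HXc => [aX1 aXM].
have inG : forall h, h \in H -> h \in G by move=> h; apply: (subsetP sHG).
have [e He] : exists e : forall s, T s -> 'rV[R]_N, forall s, rep s = s ->
    injective (e s) /\
    forall t k, k \in stabH H aS s -> e s (aT s t k) = e s t *m rho k.
  have ex : forall s, exists es : T s -> 'rV[R]_N, rep s = s ->
    injective es /\ forall t k, k \in stabH H aS s -> es (aT s t k) = es t *m rho k.
    move=> s; case: (boolP (rep s == s)) => [/eqP rs | nrs].
    - by have [_ [es Hes]] := HT s rs; exists es.
    - by exists (fun _ => 0) => rs; rewrite rs eqxx in nrs.
  exact: (fin_all_exists ex).
pose P (p : {s : TS & {set (T s * gT)}}) (au : 'rV[R]_N * 'rV[R]_N) :=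
  exists t h, [/\ h \in H, rep (tag p) = tag p,
    tagged p = ind_cls (stabH H aS (tag p)) (aT (tag p)) t h,
    au.1 = eS (tag p) *m rho h & au.2 = e (tag p) t *m rho h].
have [au Hau] : exists au : TX -> 'rV[R]_N * 'rV[R]_N, forall x, P (f x) (au x).
  suff ex : forall x, exists au, P (f x) au by exact: (fin_all_exists ex).
  move=> x; have := proj2 (fim (f x)) (ex_intro _ x erefl).
  case: (f x) => s A /= [rs [t [h [hH EA]]]].
  by exists (eS s *m rho h, e s t *m rho h), t, h.
have key : forall s (t t' : T s) h h', rep s = s -> h \in H -> h' \in H ->
    ind_cls (stabH H aS s) (aT s) t h = ind_cls (stabH H aS s) (aT s) t' h' ->
    eS s *m rho h = eS s *m rho h' /\ e s t *m rho h = e s t' *m rho h'.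
  move=> s t t' h h' rs hH h'H E.
  have [HTs _] := HT s rs; have HTc := HTs; case: HTc => [aT1 aTM].
  have [k kK [-> ->]] := cls_eq (aT1 t) (group1 (stabG s HS)) E.
  have kH : k \in H by exact: (subsetP (stab_sub H aS s)).
  have ks : aS s k = s by move: kK; rewrite inE => /andP[_ /eqP].
  have kVs : aS s (k^-1)%g = s by rewrite -{1}ks -aSM ?groupV // mulgV aS1.
  rewrite rhoM ?groupV ?inG //; split.
    by rewrite mulmxA -eSe ?groupV // kVs.
  rewrite (He s rs).2 // mulmxA -(mulmxA _ (rho k)) -rhoM ?groupV ?inG //.
  by rewrite mulgV rho1 mulmx1.
pose bad (xy : TX * TX) (eps : R) := (au xy.1).1 != (au xy.2).1 /\
  (au xy.1).1 + eps *: (au xy.1).2 = (au xy.2).1 + eps *: (au xy.2).2.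
have [eb Heb] : exists eb : TX * TX -> R, forall xy eps, bad xy eps -> eps = eb xy.
  suff ex : forall xy, exists r, forall eps, bad xy eps -> eps = r.
    by exact: (fin_all_exists ex).
  move=> xy; case: (EM (exists eps, bad xy eps)) => [[e0 b0]|nb].
  - exists e0 => eps b.
    move: b0 b; rewrite /bad; set a1 := (au xy.1).1; set a2 := (au xy.2).1.
    set u1 := (au xy.1).2; set u2 := (au xy.2).2.
    move=> [ne E0] [_ E].
    have F : forall c, a1 + c *: u1 = a2 + c *: u2 -> (a1 - a2) + c *: (u1 - u2) = 0.
      by move=> c Ec; rewrite scalerBr addrACA -opprD -Ec opprD addrACA !subrr addr0.
    have := F _ E; have := F _ E0 => G0 G1.
    have : (eps - e0) *: (u1 - u2) = 0.
      have : (a1 - a2 + eps *: (u1 - u2)) - (a1 - a2 + e0 *: (u1 - u2)) = 0.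
        by rewrite G1 G0 subrr.
      by rewrite opprD addrACA subrr add0r -scalerBl.
    move/eqP; rewrite scaler_eq0 => /orP[|]; first by rewrite subr_eq0 => /eqP.
    move=> /eqP d0; move: G1; rewrite d0 scaler0 addr0 => /eqP; rewrite subr_eq0.
    by rewrite (negbTE ne).
  - by exists 0 => eps b; exfalso; apply: nb; exists eps.
pose eps : R := 1 + \sum_xy `|eb xy|.
have eps_gt : forall xy, eb xy < eps.
  move=> xy; apply: (le_lt_trans (ler_norm _)).
  rewrite /eps (bigD1 xy) //= addrCA ltrDl.
  by apply: ltr_wpDr; [apply: sumr_ge0 => *; exact: normr_ge0 | exact: ltr01].
have eps0 : eps != 0.
  by apply: lt0r_neq0; apply: ltr_wpDr; [apply: sumr_ge0 => *; exact: normr_ge0 | exact: ltr01].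
exists (fun x => (au x).1 + eps *: (au x).2); split.
- move=> x y /= Exy.
  case: (eqVneq (au x).1 (au y).1) => [a_eq | a_ne]; last first.
    have := Heb (x, y) eps (conj a_ne Exy); move: (eps_gt (x, y)) => lt E.
    by move: lt; rewrite -E ltxx.
  move: Exy; rewrite a_eq => /addrI /(scalerI eps0) u_eq.
  move: (Hau x) (Hau y) a_eq u_eq.
  case Efx: (f x) => [s A]; case Efy: (f y) => [s' A'] /=.
  move=> [t [h [hH /= rs /= EA -> ->]]] [t' [h' [h'H /= rs' /= EA' -> ->]]] /= a_eq /= u_eq.
  have ss : s = s'.
    move: a_eq; rewrite -!eSe // => /eSi E.
    by rewrite -rs -rs' -(repE s h hH) -(repE s' h' h'H) E.
  subst s'.
  have [HTs _] := HT s rs.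
  pose k := (h * h'^-1)%g.
  have kH : k \in H by rewrite groupM ?groupV.
  have ks : k \in stabH H aS s.
    rewrite inE kH /= aSM ?groupV //.
    move: a_eq; rewrite -!eSe // => /eSi ->.
    by rewrite -aSM ?groupV // mulgV aS1.
  have tk : aT s t k = t'.
    apply: (He s rs).1; rewrite (He s rs).2 // /k rhoM ?groupV ?inG // mulmxA u_eq.
    by rewrite -mulmxA -rhoM ?groupV ?inG // mulgV rho1 mulmx1.
  apply: fi; rewrite Efx Efy EA EA' -tk.
  have -> : h' = (k^-1 * h)%g by rewrite /k invMg invgK mulgKV.
  by rewrite (ind_cls_move (K := stabG s HS)) //.
- move=> x g gH /=.
  move: (Hau x) (Hau (aX x g)); rewrite fe //.
  case: (f x) => s A /=.
  move=> [t [h [hH /= rs /= EA -> ->]]] [t' [h' [h'H _ /= EA' -> ->]]] /=.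
  move: EA'; rewrite EA ind_act_cls => E.
  have [E1 E2] := key s t t' (h * g)%g h' rs (groupM hH gH) h'H E.
  by rewrite -E1 -E2 !rhoM ?inG // mulmxDl -scalemxAl !mulmxA.
Qed.

Lemma FR_wis : weak_indexing_system G (FR rho).
Proof.
split; [exact: FR_iso | exact: FR_restr | exact: FR_conj | exact: FR_point | exact: FR_coprod].
Qed.

End Gen.

Section Join.
Variables (gT : finGroupType) (G : {group gT}) (R : realType).
Variables (n n' : nat) (rho : gT -> 'M[R]_n) (rho' : gT -> 'M[R]_n').
Hypotheses (r1 : mx_repr G rho) (r2 : mx_repr G rho').

Lemma dsum_repr : mx_repr G (dsum_rep rho rho').
Proof.
case: r1 => [o1 M1]; case: r2 => [o2 M2]; split.
  by rewrite /dsum_rep o1 o2 -scalar_mx_block.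
move=> x y xG yG; rewrite /dsum_rep M1 // M2 // mulmx_block.
by rewrite ?mulmx0 ?mul0mx ?addr0 ?add0r.
Qed.

Lemma incl_l : sub_assign G (FR rho) (FR (dsum_rep rho rho')).
Proof.
move=> H sHG T a _ [e [ei he]]; exists (fun x => row_mx (e x) 0); split.
  by move=> x y /= /eq_row_mx [/ei].
move=> x h hH /=; rewrite he // /dsum_rep mul_row_block.
by rewrite ?mulmx0 ?mul0mx ?addr0.
Qed.

Lemma incl_r : sub_assign G (FR rho') (FR (dsum_rep rho rho')).
Proof.
move=> H sHG T a _ [e [ei he]]; exists (fun x => row_mx 0 (e x)); split.
  by move=> x y /= /eq_row_mx [_ /ei].
move=> x h hH /=; rewrite he // /dsum_rep mul_row_block.
by rewrite ?mulmx0 ?mul0mx ?add0r.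
Qed.

Lemma join_min (D : assignment gT) : weak_indexing_system G D ->
  sub_assign G (FR rho) D -> sub_assign G (FR rho') D ->
  sub_assign G (FR (dsum_rep rho rho')) D.
Proof.
move=> [_ _ _ _ Dcop] s1 s2 H sHG TX aX HX [e [ei ee]].
have HXc := HX; case: HXc => [aX1 aXM].
have inG : forall h, h \in H -> h \in G by move=> h; apply: (subsetP sHG).
pose p1 x := lsubmx (e x); pose p2 x := rsubmx (e x).
have pe : forall x h, h \in H -> p1 (aX x h) = p1 x *m rho h /\ p2 (aX x h) = p2 x *m rho' h.
  move=> x h hH; rewrite /p1 /p2 ee //; move: (e x) => v.
  rewrite -(hsubmxK v) /dsum_rep mul_row_block ?mulmx0 ?mul0mx ?addr0 ?add0r.
  by rewrite !row_mxKl !row_mxKr.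
pose sq := [seq p1 x | x <- enum TX].
have memS : forall x, p1 x \in sq by move=> x; apply: map_f; rewrite mem_enum.
pose TS := seq_sub sq.
have memSh : forall (v : TS) h, h \in H -> val v *m rho h \in sq.
  move=> v h hH; have /mapP [x _ ->] := valP v; rewrite -(pe x h hH).1; exact: memS.
pose aS (v : TS) h : TS := insubd v (val v *m rho h).
have aSv : forall v h, h \in H -> val (aS v h) = val v *m rho h.
  by move=> v h hH; rewrite /aS insubdK //; exact: memSh.
have HS : is_Hset H TS aS.
  split.
    by move=> v; apply: val_inj; rewrite aSv ?group1 // (rho1 r1) mulmx1.
  move=> v a b aH bH; apply: val_inj.
  by rewrite !aSv ?groupM // (rhoM r1) ?inG // mulmxA.
have HSc := HS; case: HSc => [aS1 aSM].
have DS : D H TS aS.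
  apply: (s1 H sHG TS aS HS); exists val; split; first exact: val_inj.
  by move=> v h hH; exact: aSv.
pose orb v := [set aS v h | h in H].
have orbE : forall v h, h \in H -> orb (aS v h) = orb v.
  move=> v h hH; apply/setP=> w; apply/imsetP/imsetP => [[k kH ->]|[k kH ->]].
    by exists (h * k)%g; [rewrite groupM | rewrite aSM].
  exists (h^-1 * k)%g; first by rewrite groupM ?groupV.
  by rewrite -aSM ?groupM ?groupV // mulKVg.
have vin : forall v, v \in orb v.
  by move=> v; apply/imsetP; exists 1%g; rewrite ?group1 // aS1.
pose rep v := odflt v [pick w in orb v].
have rep0 : forall v, rep v \in orb v.
  move=> v; rewrite /rep; case: pickP => [w //| none].
  by have := none v; rewrite vin.
have repE : forall v h, h \in H -> rep (aS v h) = rep v.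
  move=> v h hH; rewrite /rep orbE //; case: pickP => [//|none].
  by have := none v; rewrite vin.
have repP : forall v, exists2 h, h \in H & aS v h = rep v.
  by move=> v; have /imsetP [h hH E] := rep0 v; exists h.
pose T := fun v : TS => ({x : TX | p1 x == val v} : finType).
pose aT v (y : T v) k : T v := insubd y (aX (val y) k).
have memT : forall v (y : T v) k, k \in stabH H aS v -> p1 (aX (val y) k) == val v.
  move=> v y k; rewrite inE => /andP[kH /eqP kv].
  by rewrite (pe _ _ kH).1 (eqP (valP y)) -aSv // kv.
have aTv : forall v y k, k \in stabH H aS v -> val (aT v y k) = aX (val y) k.
  by move=> v y k kK; rewrite /aT insubdK //; exact: memT.
have HTall : forall v, is_Hset (stabH H aS v) (T v) (aT v).
  move=> v; split.
    move=> y; apply: val_inj; rewrite aTv; [exact: aX1 | exact: (group1 (stabG v HS))].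
  move=> y a b aK bK; apply: val_inj.
  have aH := subsetP (stab_sub H aS v) _ aK; have bH := subsetP (stab_sub H aS v) _ bK.
  rewrite !aTv //; last exact: (groupM (G := stabG v HS)).
  by rewrite aXM.
have HT : forall v, rep v = v ->
    is_Hset (stabH H aS v) (T v) (aT v) /\ D (stabH H aS v) (T v) (aT v).
  move=> v _; split; first exact: HTall.
  apply: (s2 (stabG v HS) (subset_trans (stab_sub H aS v) sHG) (T v) (aT v) (HTall v)).
  exists (fun y => p2 (val y)); split.
    move=> y z /= E; apply: val_inj; apply: ei.
    rewrite -(hsubmxK (e (val y))) -(hsubmxK (e (val z))).
    change (row_mx (p1 (val y)) (p2 (val y)) = row_mx (p1 (val z)) (p2 (val z))).
    by rewrite (eqP (valP y)) (eqP (valP z)) E.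
  move=> y k kK /=; rewrite aTv //.
  exact: (pe _ _ (subsetP (stab_sub H aS v) _ kK)).2.
pose sx x : TS := Sub (p1 x) (memS x).
have sxv : forall x, val (sx x) = p1 x by move=> x; rewrite /sx SubK.
have sxh : forall x h, h \in H -> sx (aX x h) = aS (sx x) h.
  by move=> x h hH; apply: val_inj; rewrite aSv // !sxv (pe x h hH).1.
pose gx x : gT := odflt 1%g [pick g in H | aS (sx x) g == rep (sx x)].
have gxP : forall x, gx x \in H /\ aS (sx x) (gx x) = rep (sx x).
  move=> x; rewrite /gx; case: pickP => [g /andP[gH /eqP E] // | none].
  by have [h hH E] := repP (sx x); have := none h; rewrite hH E eqxx.
have pf : forall x, p1 (aX x (gx x)) == val (rep (sx x)).
  by move=> x; have [gH E] := gxP x; rewrite -E aSv // sxv (pe _ _ gH).1.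
pose f x : {v : TS & {set (T v * gT)}} :=
  existT (fun v => {set (T v * gT)}) (rep (sx x))
    (ind_cls (stabH H aS (rep (sx x))) (aT (rep (sx x)))
       (Sub (aX x (gx x)) (pf x) : T (rep (sx x))) (gx x)^-1%g).
have decTS : forall x y : TS, {x = y} + {x <> y} := fun x y => decP eqP.
apply: (Dcop H sHG TS aS HS DS rep (conj repE repP) T aT HT TX aX HX f).
- move=> x y; rewrite /f => Exy.
  have Er : rep (sx x) = rep (sx y) := congr1 tag Exy.
  move: Exy; move: (pf x) (pf y); rewrite Er => qx qy.
  move=> Exy0; have Exy := @inj_pair2_eq_dec _ decTS _ _ _ _ Exy0.
  have [aT1 _] := HTall (rep (sx y)).
  have [k kK [E1 E2]] := cls_eq (aT1 _) (group1 (stabG (rep (sx y)) HS)) Exy.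
  have kH : k \in H := subsetP (stab_sub H aS _) _ kK.
  have [gxH _] := gxP x; have [gyH _] := gxP y.
  have Ev := congr1 val E1; rewrite aTv //= in Ev.
  have -> : x = aX (aX x (gx x)) (gx x)^-1%g by rewrite -aXM ?groupV // mulgV aX1.
  rewrite Ev E2 -!aXM ?groupM ?groupV //.
  by rewrite mulKVg mulgV aX1.
- move=> p; split; last first.
  + move=> [x <-]; rewrite /f /=; split.
      by have [g gH E] := repP (sx x); rewrite -E repE.
    exists (Sub (aX x (gx x)) (pf x)), (gx x)^-1%g; split=> //.
    by rewrite groupV (gxP x).1.
  + case: p => v A /= [rv [t [h [hH ->]]]].
    have tv : p1 (val t) = val v := eqP (valP t).
    have sxE : sx (aX (val t) h) = aS v h.
      by apply: val_inj; rewrite aSv // sxv (pe _ _ hH).1 tv.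
    have Er : rep (sx (aX (val t) h)) = v by rewrite sxE repE.
    exists (aX (val t) h); rewrite /f.
    have [gH gE] := gxP (aX (val t) h).
    move: (pf (aX (val t) h)); rewrite Er => q.
    set x := aX (val t) h in gH gE q *; set g := gx x in gH gE q *.
    have kK : (h * g)%g \in stabH H aS v.
      by rewrite inE groupM //= aSM // -sxE gE Er.
    rewrite -(ind_cls_move (K := stabG v HS) (HTall v) t h kK).
    have E1 : (Sub (aX x g) q : T v) = aT v t (h * g)%g.
      by apply: val_inj; rewrite aTv //= aXM.
    have E2 : (g^-1 = (h * g)^-1 * h)%g by rewrite invMg -mulgA mulVg mulg1.
    by rewrite E1 E2.
- move=> x h hH.
  have Er : rep (sx (aX x h)) = rep (sx x) by rewrite sxh // repE.
  have [g'H g'E] := gxP (aX x h); have [gH gE] := gxP x.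
  rewrite /f; move: (pf (aX x h)); rewrite Er => q /=.
  rewrite ind_act_cls.
  set g := gx x in gH gE *; set g' := gx (aX x h) in g'H g'E q *.
  pose k := (g^-1 * h * g')%g.
  have gk : (g * k = h * g')%g by rewrite /k !mulgA mulgV mul1g.
  have kK : k \in stabH H aS (rep (sx x)).
    rewrite inE !groupM ?groupV //=; apply/eqP.
    rewrite -{1}gE -aSM ?groupM ?groupV //.
    transitivity (aS (sx x) (h * g')%g); first by congr aS; exact: gk.
    by rewrite aSM // -sxh // g'E Er.
  rewrite -(ind_cls_move (K := stabG (rep (sx x)) HS) (HTall _) (Sub (aX x g) (pf x)) (g^-1 * h)%g kK).
  have E1 : (Sub (aX (aX x h) g') q : T (rep (sx x))) = aT (rep (sx x)) (Sub (aX x g) (pf x)) k.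
    apply: val_inj; rewrite aTv //= -!aXM ?(subsetP (stab_sub H aS _) _ kK) //.
    by congr aX; symmetry; exact: gk.
  have E2 : (g'^-1 = k^-1 * (g^-1 * h))%g.
    rewrite /k !invMg invgK -!mulgA.
    by rewrite mulKVg mulVg mulg1.
  by rewrite E1 E2.
Qed.

End Join.

Theorem mainTheorem11 (gT : finGroupType) (G : {group gT}) (R : realType)
    (n n' : nat) (rho : gT -> 'M[R]_n) (rho' : gT -> 'M[R]_n') :
  orth_rep G rho -> orth_rep G rho' ->
  is_wis_join G (FR rho) (FR rho') (FR (dsum_rep rho rho')).
Proof.
move=> [r1 _] [r2 _]; split.
- exact: (FR_wis (dsum_repr r1 r2)).
- exact: incl_l.
- exact: incl_r.
- move=> D HD s1 s2; exact: (join_min r1 HD s1 s2).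
Qed.
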